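(* Let $G$ be a finite inverse semigroup acting by endomorphisms on the left of a locally finite inverse semigroup $A$, and let $I$ be the $\lambda$-semidirect product of $G$ acting on $A$. Then $I$ is locally finite. Moreover, if $\sigma:\mathbb{N}\to\mathbb{N}$ is non-decreasing and every $k$-generated subsemigroup of $A$ has cardinality at most $\sigma(k)$ (for all $k$), then every $m$-generated subsemigroup of $I$ has cardinality at most $|G|\,\sigma(m|G|)$. *)

(* Defs.v *)
From HB Require Import structures.
From mathcomp Require Import all_boot.
Set Implicit Arguments.
(* list membership (Prop), for types without decidable equality *)
Fixpoint InL (T : Type) (x : T) (l : list T) : Prop :=
  match l with nil => False | y :: l' => y = x \/ InL x l' end.
 Unset Strict Implicit. Unset Printing Implicit Defensive.

Definition is_inverse_semigroup (T : Type) (mul : T -> T -> T) (inv : T -> T) : Prop :=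
  (forall x y z, mul x (mul y z) = mul (mul x y) z) /\
  (forall x, mul (mul x (inv x)) x = x /\ mul (mul (inv x) x) (inv x) = inv x) /\
  (forall x y, mul (mul x y) x = x -> mul (mul y x) y = y -> y = inv x).

Definition is_left_action_by_endos (G A : Type) (mulG : G -> G -> G)
    (mulA : A -> A -> A) (act : G -> A -> A) : Prop :=
  (forall s t a, act (mulG s t) a = act s (act t a)) /\
  (forall s a b, act s (mulA a b) = mulA (act s a) (act s b)).

Inductive gen (T : Type) (mul : T -> T -> T) (X : list T) : T -> Prop :=
  | gen_base x : InL x X -> gen mul X x
  | gen_mul x y : gen mul X x -> gen mul X y -> gen mul X (mul x y).

Definition card_le (T : Type) (P : T -> Prop) (n : nat) : Prop :=
  exists l : list T, size l <= n /\ forall x, P x -> InL x l.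

Definition finite_set (T : Type) (P : T -> Prop) : Prop :=
  exists l : list T, forall x, P x -> InL x l.

(* Locally finite relative to a carrier predicate S (S = everything for a
   semigroup on a full type): every finitely generated subsemigroup is finite. *)
Definition locally_finite_on (T : Type) (S : T -> Prop) (mul : T -> T -> T) : Prop :=
  forall X : list T, (forall x, InL x X -> S x) -> finite_set (gen mul X).

(* Billhardt's lambda-semidirect product A ⋊^λ G:
   carrier { (a, s) in A x G | (s s^-1) . a = a },
   product (a, s)(b, t) = (((st)(st)^-1 . a) (s . b), st). *)
Definition lsd_mem (G A : Type) (mulG : G -> G -> G) (invG : G -> G)
    (act : G -> A -> A) (p : A * G) : Prop :=
  act (mulG p.2 (invG p.2)) p.1 = p.1.

Definition lsd_mul (G A : Type) (mulG : G -> G -> G) (invG : G -> G)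
    (mulA : A -> A -> A) (act : G -> A -> A) (p q : A * G) : A * G :=
  let st := mulG p.2 q.2 in
  (mulA (act (mulG st (invG st)) p.1) (act p.2 q.1), st).

(* Main.v *)
Require Import Defs.
From HB Require Import structures.
From mathcomp Require Import all_boot.
Set Implicit Arguments.

Lemma InL_cat (T : Type) (x : T) s t : InL x s \/ InL x t -> InL x (s ++ t).
Proof.
elim: s => [|y s IH] /= [H|H] //; auto.
case: H => [->|H]; auto.
Qed.

Lemma InL_cat_inv (T : Type) (x : T) s t : InL x (s ++ t) -> InL x s \/ InL x t.
Proof.
elim: s => [|y s IH] /=; auto.
case=> [->|H]; auto. case: (IH H); auto.
Qed.

Lemma InL_map (S T : Type) (f : S -> T) x s : InL x s -> InL (f x) (map f s).
Proof. elim: s => [|y s IH] //= [->|H]; auto. Qed.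

Lemma InL_map_inv (S T : Type) (f : S -> T) z s :
  InL z (map f s) -> exists x, InL x s /\ z = f x.
Proof.
elim: s => [|y s IH] //= [<-|H]; first by exists y; auto.
case: (IH H) => x [? ?]; exists x; auto.
Qed.

Lemma InL_allpairs (S T R : Type) (f : S -> T -> R) x y s t :
  InL x s -> InL y t -> InL (f x y) (allpairs f s t).
Proof.
move=> Hx Hy; elim: s Hx => [|z s IH] //= [<-|H]; rewrite ?allpairs_cons;
  apply: InL_cat; [left; exact: InL_map | right; exact: IH].
Qed.

Lemma InL_allpairs_inv (S T R : Type) (f : S -> T -> R) z s t :
  InL z (allpairs f s t) -> exists x y, InL x s /\ InL y t /\ z = f x y.
Proof.
elim: s => [|w s IH] //= H; have [{}H|{}H] := @InL_cat_inv _ _ _ _ H.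
- have [y [? ?]] := @InL_map_inv _ _ _ _ _ H; exists w, y; auto.
- case: (IH H) => x [y [? [? ?]]]; exists x, y; auto.
Qed.

Lemma InL_mem (T : eqType) (x : T) s : x \in s -> InL x s.
Proof. elim: s => [|y s IH] //=; rewrite in_cons => /orP [/eqP ->|H]; auto. Qed.

Arguments InL_cat {T x s t}.
Arguments InL_cat_inv {T x s t}.
Arguments InL_map {S T} f {x s}.
Arguments InL_map_inv {S T f z s}.
Arguments InL_allpairs {S T R} f {x y s t}.
Arguments InL_allpairs_inv {S T R f z s t}.
Arguments InL_mem {T x s}.
Section Main.
Variables (G : finType) (mulG : G -> G -> G) (invG : G -> G)
    (A : Type) (mulA : A -> A -> A) (act : G -> A -> A).
Hypothesis Hact : is_left_action_by_endos mulG mulA act.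

Definition Yl (X : list (A * G)) : list A :=
  allpairs (fun p g => act g p.1) X (enum G).

Lemma gen_act X g a : gen mulA (Yl X) a -> gen mulA (Yl X) (act g a).
Proof.
case: Hact => H1 H2.
elim=> [x Hx|x y _ IHx _ IHy].
- case: (InL_allpairs_inv Hx) => p [h [Hp [_ ->]]].
  rewrite -H1; apply: gen_base.
  exact: (InL_allpairs (fun p g => act g p.1) Hp (InL_mem (mem_enum _ _))).
- rewrite H2; exact: gen_mul.
Qed.

Lemma key X : (forall p, InL p X -> lsd_mem mulG invG act p) ->
  forall p, gen (lsd_mul mulG invG mulA act) X p -> gen mulA (Yl X) p.1.
Proof.
move=> HX p; elim=> [x Hx|x y _ IHx _ IHy].
- rewrite -(HX x Hx); apply: gen_base.
  exact: (InL_allpairs (fun p g => act g p.1) Hx (InL_mem (mem_enum _ _))).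
- rewrite /lsd_mul /=; apply: gen_mul; exact: gen_act.
Qed.

Lemma cover X L : (forall p, InL p X -> lsd_mem mulG invG act p) ->
  (forall a, gen mulA (Yl X) a -> InL a L) ->
  forall p, gen (lsd_mul mulG invG mulA act) X p ->
    InL p (allpairs (fun a g => (a, g)) L (enum G)).
Proof.
move=> HX HL [a g] Hp.
apply: (InL_allpairs (fun a g => (a, g)) (HL _ (key HX Hp))).
exact: InL_mem (mem_enum _ _).
Qed.

End Main.

Theorem theorem2 (G : finType) (mulG : G -> G -> G) (invG : G -> G)
    (A : Type) (mulA : A -> A -> A) (invA : A -> A) (act : G -> A -> A) :
  is_inverse_semigroup mulG invG ->
  is_inverse_semigroup mulA invA ->
  is_left_action_by_endos mulG mulA act ->
  locally_finite_on (fun _ : A => True) mulA ->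
  locally_finite_on (lsd_mem mulG invG act) (lsd_mul mulG invG mulA act) /\
  (forall sigma : nat -> nat,
     (forall m n, m <= n -> sigma m <= sigma n) ->
     (forall (k : nat) (X : list A), size X = k ->
        card_le (gen mulA X) (sigma k)) ->
     forall (m : nat) (X : list (A * G)),
       size X = m ->
       (forall p, InL p X -> lsd_mem mulG invG act p) ->
       card_le (gen (lsd_mul mulG invG mulA act) X) (#|G| * sigma (m * #|G|))).
Proof.
move=> _ _ Hact HLF; split.
- move=> X HX.
  case: (HLF (@Yl G A act X) (fun _ _ => I)) => L HL.
  exists (allpairs (fun a g => (a, g)) L (enum G)).
  move=> p Hp; exact: (@cover G mulG invG A mulA act Hact X L HX HL p Hp).
- move=> sigma _ Hs m X HXm HX.
  have Hsz : size (@Yl G A act X) = m * #|G| by rewrite /Yl size_allpairs HXm cardT.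
  case: (Hs _ _ Hsz) => L [HLs HL].
  exists (allpairs (fun a g => (a, g)) L (enum G)); split.
  + by rewrite size_allpairs -cardT mulnC leq_mul2l HLs orbT.
  + move=> p Hp; exact: (@cover G mulG invG A mulA act Hact X L HX HL p Hp).
Qed.
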